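(* Let $M=(E,\mathcal{I})$ be a matroid with rank function $r$, and let $L\in\mathbb{R}^{E\times E}$ be symmetric ($L^T=L$). Let $x\in B(M)$, and let $\{P_1,\dots,P_k\}$ be the partition of $E$ such that $(Lx)(e)=c_i$ for all $e\in P_i$, with $c_1<c_2<\dots<c_k$. Then the following are equivalent: (i) $(x,x)$ is a symmetric Nash equilibrium; (ii) all bases of $M$ have the same cost with respect to the weights $Lx$; (iii) for every base $B$ of $M$ and every $i$, $|B\cap P_i|=r(P_i)$; (iv) $x(P_i)=r(P_i)$ for all $i\in\{1,\dots,k\}$; (v) for every circuit $C$ of $M$ there exists $i$ with $C\subseteq P_i$.
   Context: $B(M)=\{x\in\mathbb{R}^E: x\ge0,\ x(S)\le r(S)\ \forall S\subseteq E,\ x(E)=r(E)\}$ is the base polytope, $x(S)=\sum_{e\in S}x(e)$. The matroid game: the row player chooses $x\in B(M)$ and wants to minimize $x^TLy$, the column player chooses $y\in B(M)$ and wants to maximize it. $(x,x)$ with $x\in B(M)$ is a symmetric Nash equilibrium if $x^TLz\le x^TLx\le z^TLx$ for all $z\in B(M)$. The cost of a base $B$ w.r.t. weights $w$ is $\sum_{e\in B}w(e)$. *)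

(* Defs.v *)
From HB Require Import structures.
From mathcomp Require Import all_boot all_order all_algebra.
From mathcomp Require Import reals.
Set Implicit Arguments. Unset Strict Implicit. Unset Printing Implicit Defensive.
Import Order.TTheory GRing.Theory Num.Theory.
Local Open Scope ring_scope.

Record matroid (E : finType) := Matroid {
  indep : {set {set E}};
  indep_set0 : set0 \in indep;
  indep_sub : forall A B : {set E}, B \in indep -> A \subset B -> A \in indep;
  indep_exch : forall A B : {set E}, A \in indep -> B \in indep ->
     (#|A| < #|B|)%N -> exists2 e, e \in B :\: A & e |: A \in indep
}.

Section Matroid.
Variable E : finType.
Variable M : matroid E.

Definition rank (S : {set E}) : nat :=
  \max_(I in indep M | I \subset S) #|I|.

Definition is_base (B : {set E}) : bool := maxset (fun A => A \in indep M) B.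

Definition is_circuit (C : {set E}) : bool := minset (fun A => A \notin indep M) C.

Variable R : realType.

Definition xsum (x : E -> R) (S : {set E}) : R := \sum_(e in S) x e.

Definition in_base_polytope (x : E -> R) : Prop :=
  (forall e, 0 <= x e) /\
  (forall S : {set E}, xsum x S <= (rank S)%:R) /\
  xsum x setT = (rank setT)%:R.

Definition matvec (L : E -> E -> R) (x : E -> R) (e : E) : R :=
  \sum_(f : E) L e f * x f.

Definition bilin (x : E -> R) (L : E -> E -> R) (y : E -> R) : R :=
  \sum_(e : E) \sum_(f : E) x e * L e f * y f.

Definition sym_nash (L : E -> E -> R) (x : E -> R) : Prop :=
  in_base_polytope x /\
  forall z, in_base_polytope z ->
    bilin x L z <= bilin x L x /\ bilin x L x <= bilin z L x.

Definition cost (w : E -> R) (B : {set E}) : R := \sum_(e in B) w e.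

(* the class P_i of the partition of E by the values of w containing e *)
Definition level_set (w : E -> R) (e : E) : {set E} := [set f | w f == w e].

End Matroid.

(* Main.v *)
Require Import Defs.
From HB Require Import structures.
From mathcomp Require Import all_boot all_order all_algebra.
From mathcomp Require Import reals.
Import Order.TTheory GRing.Theory Num.Theory.
Local Open Scope ring_scope.
Set Implicit Arguments. Unset Strict Implicit.

Lemma rank_ge (E : finType) (M : matroid E) (S I : {set E}) :
  I \in indep M -> I \subset S -> (#|I| <= rank M S)%N.
Proof.
move=> hI hS; rewrite /rank.
by apply: (leq_bigmax_cond (P := fun I => (I \in indep M) && (I \subset S))) => /=; rewrite hI hS.
Qed.

Lemma rank_att (E : finType) (M : matroid E) (S : {set E}) :
  exists2 J, J \in indep M & J \subset S /\ #|J| = rank M S.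
Proof.
have hA : (0 < #|[pred I : {set E} | (I \in indep M) && (I \subset S)]|)%N.
  apply/card_gt0P; exists set0; by rewrite inE indep_set0 sub0set.
case: (eq_bigmax_cond (fun I : {set E} => #|I|) hA) => J; rewrite inE => /andP[h1 h2] h3.
exists J => //; split => //; rewrite /rank -h3.
all: try by apply: eq_bigl => I; rewrite inE.
Qed.

Lemma maxin_rank (E : finType) (M : matroid E) (S I : {set E}) :
  I \in indep M -> I \subset S ->
  (forall g, g \in S -> g \notin I -> g |: I \notin indep M) ->
  #|I| = rank M S.
Proof.
move=> hI hS hmax; apply/eqP; rewrite eqn_leq rank_ge //=.
case: (@rank_att _ M S) => J hJ [hJS <-]; rewrite leqNgt; apply/negP => hlt.
case: (indep_exch hI hJ hlt) => g; rewrite inE => /andP[gI gJ] hg.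
by move: (hmax g (subsetP hJS g gJ) gI); rewrite hg.
Qed.

Lemma base_card (E : finType) (M : matroid E) (B : {set E}) :
  is_base M B -> #|B| = rank M setT.
Proof.
move=> /maxsetP [hB hmax]; apply: maxin_rank; [done | exact: subsetT | ].
move=> g _ gB; apply/negP => hg.
have := hmax _ hg (subsetUr _ _) => /setP /(_ g); rewrite !inE eqxx /=.
by rewrite (negbTE gB).
Qed.

Lemma card_base (E : finType) (M : matroid E) (J : {set E}) :
  J \in indep M -> #|J| = rank M setT -> is_base M J.
Proof.
move=> hJ hc; apply/maxsetP; split => // A hA hJA.
apply/eqP; rewrite eq_sym eqEcard hJA /= hc.
exact: rank_ge (subsetT _).
Qed.

Lemma augment (E : finType) (M : matroid E) (n : nat) (I B : {set E}) :
  (#|B| - #|I|)%N = n -> I \in indep M -> B \in indep M -> (#|I| <= #|B|)%N ->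
  exists J, [/\ J \in indep M, I \subset J, J \subset I :|: B & #|J| = #|B|].
Proof.
elim: n I => [|n IH] I hn hI hB hle.
  exists I; split => //; first by rewrite subsetUl.
  by apply/eqP; rewrite eqn_leq hle /= -subn_eq0 hn.
have hlt : (#|I| < #|B|)%N by rewrite -subn_gt0 hn.
case: (indep_exch hI hB hlt) => e; rewrite inE => /andP[eI eB] he.
have hc : #|e |: I| = #|I|.+1 by rewrite cardsU1 eI.
case: (IH (e |: I)) => //; first by rewrite hc subnS hn.
  by rewrite hc.
move=> J [h1 h2 h3 h4]; exists J; split => //.
  by apply: subset_trans h2; apply: subsetUr.
apply: (subset_trans h3); apply/subsetP => y; rewrite !inE.
by case/orP => [/orP[/eqP->|->]|->]; rewrite ?eB ?orbT.
Qed.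

Lemma ii_v (E : finType) (M : matroid E) (R : realType) (w : E -> R) :
  (forall B1 B2, is_base M B1 -> is_base M B2 -> cost w B1 = cost w B2) ->
  forall C, is_circuit M C -> exists e, C \subset level_set w e.
Proof.
move=> hc C /minsetP [hCd hCmin].
have hdel : forall a, a \in C -> C :\ a \in indep M.
  move=> a aC; apply/negPn/negP => hd.
  by have := hCmin _ hd (subD1set C a) => /setP/(_ a); rewrite !inE eqxx aC.
have [e0 e0C] : exists e0, e0 \in C.
  case: (set_0Vmem C) => [C0|[y yC]]; [by move: hCd; rewrite C0 indep_set0 | by exists y].
exists e0; apply/subsetP => f fC; rewrite inE.
case: (eqVneq f e0) => [->//|fne].
case: (maxset_exists (P := fun A => A \in indep M) (hdel e0 e0C)) => B hB hsub.
case/maxsetP: (hB) => hBi _.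
have e0B : e0 \notin B.
  apply/negP => e0B; move: hCd => /negP; apply; apply: (indep_sub hBi).
  apply/subsetP => y yC; case: (eqVneq y e0) => [->//|yne].
  by apply: (subsetP hsub); rewrite !inE yne yC.
have fB : f \in B by apply: (subsetP hsub); rewrite !inE fne fC.
have hI := hdel f fC.
have hle : (#|C :\ f| <= #|B|)%N.
  have -> : #|C :\ f| = #|C :\ e0|.
    by have := cardsD1 f C; have := cardsD1 e0 C; rewrite fC e0C => -> /eqP; rewrite eqSS => /eqP.
  exact: subset_leq_card.
case: (@augment _ M _ _ _ (erefl _) hI hBi hle) => J [hJ hIJ hJIB hJc].
have fJ : f \notin J.
  apply/negP => fJ; move: hCd => /negP; apply; apply: (indep_sub hJ).
  apply/subsetP => y yC; case: (eqVneq y f) => [->//|yne].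
  by apply: (subsetP hIJ); rewrite !inE yne yC.
have e0Bf : e0 \notin B :\ f by rewrite inE (negbTE e0B) andbF.
have hJeq : J = e0 |: (B :\ f).
  apply/eqP; rewrite eqEcard; apply/andP; split.
    apply/subsetP => y yJ; have := subsetP hJIB y yJ; rewrite !inE.
    have yf : y != f by apply: contraNneq fJ => <-.
    rewrite yf /=; case/orP => [yC|->]; last by rewrite orbT.
    case: (eqVneq y e0) => [//|yne]; rewrite /=.
    by have := subsetP hsub y; rewrite !inE yne yC => ->.
  rewrite cardsU1 e0Bf hJc (cardsD1 f B) fB //.
have hJb : is_base M J by apply: card_base => //; rewrite hJc; apply: base_card.
have := hc _ _ hB hJb; rewrite /cost hJeq (big_setU1 _ e0Bf) (big_setD1 f fB) /=.
by move/addIr => ->.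
Qed.

Lemma v_iii (E : finType) (M : matroid E) (R : realType) (w : E -> R) :
  (forall C, is_circuit M C -> exists e, C \subset level_set w e) ->
  forall B e, is_base M B -> #|B :&: level_set w e| = rank M (level_set w e).
Proof.
move=> hv B e hB; case/maxsetP: (hB) => hBi hBmax.
apply: maxin_rank.
- by apply: (indep_sub hBi); apply: subsetIl.
- exact: subsetIr.
move=> g gP gnI; apply/negP => hg.
have gB : g \notin B by apply/negP => gB; move: gnI; rewrite inE gB gP.
have hd : g |: B \notin indep M.
  apply/negP => hd; have := hBmax _ hd (subsetUr _ _) => /setP/(_ g).
  by rewrite !inE eqxx (negbTE gB).
case: (minset_exists (P := fun A => A \notin indep M) hd) => C hC hCsub.
case: (hv C hC) => e' hCe'.
case/minsetP: (hC) => hCd _.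
have gC : g \in C.
  apply/negPn/negP => gC; move: hCd => /negP; apply; apply: (indep_sub hBi).
  apply/subsetP => y yC; have := subsetP hCsub y yC; rewrite !inE.
  by case/orP => [/eqP yg|//]; move: gC; rewrite -yg yC.
have : C \subset g |: (B :&: level_set w e).
  apply/subsetP => y yC; have := subsetP hCsub y yC; rewrite !inE.
  case/orP => [->//|yB]; rewrite yB /=.
  have := subsetP hCe' y yC; have := subsetP hCe' g gC; rewrite !inE.
  move: gP; rewrite inE => /eqP h1 /eqP h2 /eqP h3; apply/orP; right.
  by rewrite h3 -h2 h1.
by move/(indep_sub hg) => hCi; move: hCd; rewrite hCi.
Qed.

From mathcomp Require Import ring.

Lemma lvl_eq (E : finType) (R : realType) (w : E -> R) e f :
  f \in level_set w e -> level_set w f = level_set w e.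
Proof. by rewrite inE => /eqP h; apply/setP => g; rewrite !inE h. Qed.

Lemma lvl_card (E : finType) (R : realType) (w : E -> R) e :
  (#|level_set w e|%:R != 0 :> R).
Proof.
rewrite pnatr_eq0 -lt0n; apply/card_gt0P; exists e; by rewrite inE.
Qed.

Lemma class_sum (E : finType) (R : realType) (w : E -> R) (h : E -> R) :
  \sum_e xsum h (level_set w e) / #|level_set w e|%:R = \sum_e h e.
Proof.
transitivity (\sum_e \sum_(f in level_set w e) h f / #|level_set w f|%:R).
  apply: eq_bigr => e _; rewrite /xsum mulr_suml.
  by apply: eq_bigr => f fP; rewrite (lvl_eq fP).
under eq_bigr => e _ do rewrite big_mkcond /=.
rewrite exchange_big /=; apply: eq_bigr => f _.
rewrite -big_mkcond /=.
transitivity (\sum_(e in level_set w f) h f / #|level_set w f|%:R).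
  by apply: eq_bigl => e; rewrite !inE eq_sym.
rewrite sumr_const; set n := #|_|.
by rewrite -[_ *+ n]mulr_natr divfK // lvl_card.
Qed.

Lemma xsum_setT (E : finType) (R : realType) (h : E -> R) :
  xsum h setT = \sum_e h e.
Proof. by rewrite /xsum; apply: eq_bigl => e; rewrite inE. Qed.

Lemma squeeze (E : finType) (R : realType) (w : E -> R) (a b : E -> R) :
  (forall e, xsum a (level_set w e) <= xsum b (level_set w e)) ->
  xsum a setT = xsum b setT ->
  forall e, xsum a (level_set w e) = xsum b (level_set w e).
Proof.
move=> hle hT.
have H : \sum_e (xsum b (level_set w e) - xsum a (level_set w e))
            / #|level_set w e|%:R = 0.
  transitivity (\sum_e xsum (fun f => b f - a f) (level_set w e)
            / #|level_set w e|%:R).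
    by apply: eq_bigr => e _; rewrite /xsum sumrB.
  by rewrite class_sum sumrB -!xsum_setT hT subrr.
move=> e; apply/eqP; rewrite eq_sym -subr_eq0.
have := psumr_eq0P _ H (i := e) isT.
move=> /(_ _)/eqP; rewrite mulf_eq0 invr_eq0 (negbTE (@lvl_card _ _ _ _)) orbF; apply.
by move=> i _; rewrite divr_ge0 // subr_ge0.
Qed.

Lemma dot_class (E : finType) (R : realType) (w : E -> R) (z : E -> R) :
  \sum_e w e * z e = \sum_e w e * xsum z (level_set w e) / #|level_set w e|%:R.
Proof.
rewrite -(class_sum w (fun f => w f * z f)); apply: eq_bigr => e _.
rewrite /xsum mulr_sumr; congr (_ / _); apply: eq_bigr => f.
by rewrite inE => /eqP ->.
Qed.

Lemma bilin_r (E : finType) (R : realType) (L : E -> E -> R) (x z : E -> R) :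
  bilin z L x = \sum_e matvec L x e * z e.
Proof.
rewrite /bilin /matvec; apply: eq_bigr => e _; rewrite mulr_suml.
by apply: eq_bigr => f _; ring.
Qed.

Lemma bilin_l (E : finType) (R : realType) (L : E -> E -> R) (x z : E -> R) :
  (forall e f, L e f = L f e) ->
  bilin x L z = \sum_e matvec L x e * z e.
Proof.
move=> hL; rewrite /bilin /matvec exchange_big; apply: eq_bigr => e _.
rewrite mulr_suml; apply: eq_bigr => f _; rewrite hL; ring.
Qed.

Definition ind (E : finType) (R : realType) (B : {set E}) (e : E) : R :=
  if e \in B then 1 else 0.

Lemma xsum_ind (E : finType) (R : realType) (B S : {set E}) :
  xsum (ind R B) S = #|B :&: S|%:R.
Proof.
rewrite /xsum (big_setID B) /= [X in _ + X]big1 ?addr0; last first.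
  by move=> e; rewrite inE => /andP[/negbTE]; rewrite /ind => ->.
rewrite setIC; transitivity (\sum_(e in B :&: S) (1 : R)).
  by apply: eq_bigr => e; rewrite inE /ind => /andP[->].
by rewrite sumr_const.
Qed.

Lemma ind_poly (E : finType) (M : matroid E) (R : realType) (B : {set E}) :
  is_base M B -> in_base_polytope M (ind R B).
Proof.
move=> hB; case/maxsetP: (hB) => hBi _; split; last split.
- by move=> e; rewrite /ind; case: ifP.
- move=> S; rewrite xsum_ind ler_nat; apply: rank_ge; last exact: subsetIr.
  by apply: (indep_sub hBi); apply: subsetIl.
- by rewrite xsum_ind setIT (base_card hB).
Qed.

Lemma cost_ind (E : finType) (R : realType) (w : E -> R) (B : {set E}) :
  \sum_e w e * ind R B e = cost w B.
Proof.
rewrite /cost [RHS]big_mkcond; apply: eq_bigr => e _; rewrite /ind.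
by case: ifP; rewrite ?mulr1 ?mulr0.
Qed.

Lemma nash_dot (E : finType) (M : matroid E) (R : realType)
    (L : E -> E -> R) (x z : E -> R) :
  (forall e f, L e f = L f e) ->
  bilin x L z <= bilin x L x /\ bilin x L x <= bilin z L x <->
  \sum_e matvec L x e * z e = \sum_e matvec L x e * x e.
Proof.
move=> hL; rewrite (bilin_l _ _ hL) (bilin_r L x x) bilin_r; split.
  by case=> h1 h2; apply/le_anti; rewrite h1 h2.
by move=> ->; split.
Qed.

Lemma i_ii (E : finType) (M : matroid E) (R : realType)
    (L : E -> E -> R) (x : E -> R) :
  (forall e f, L e f = L f e) -> sym_nash M L x ->
  forall B1 B2, is_base M B1 -> is_base M B2 ->
          cost (matvec L x) B1 = cost (matvec L x) B2.
Proof.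
move=> hL [hx hN] B1 B2 h1 h2.
have hB : forall B, is_base M B -> cost (matvec L x) B = \sum_e matvec L x e * x e.
  move=> B hB; rewrite -cost_ind.
  by have /(nash_dot M _ _ hL) := hN _ (ind_poly R hB).
by rewrite !hB.
Qed.

Lemma iv_i (E : finType) (M : matroid E) (R : realType)
    (L : E -> E -> R) (x : E -> R) :
  (forall e f, L e f = L f e) -> in_base_polytope M x ->
  (forall e, xsum x (level_set (matvec L x) e)
                    = (rank M (level_set (matvec L x) e))%:R) ->
  sym_nash M L x.
Proof.
move=> hL hx hiv; split => // z hz; apply/(nash_dot M _ _ hL).
case: hz => _ [hz1 hz2]; case: hx => _ [_ hx2].
rewrite dot_class [RHS]dot_class; apply: eq_bigr => e _.
rewrite (@squeeze _ _ (matvec L x) z x) // => [f|]; first by rewrite hiv.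
by rewrite hz2 hx2.
Qed.

Lemma iii_iv (E : finType) (M : matroid E) (R : realType) (w x : E -> R) :
  in_base_polytope M x ->
  (forall B e, is_base M B -> #|B :&: level_set w e| = rank M (level_set w e)) ->
  forall e, xsum x (level_set w e) = (rank M (level_set w e))%:R.
Proof.
move=> [_ [hx1 hx2]] hiii e.
case: (maxset_exists (P := fun A => A \in indep M) (indep_set0 M)) => B hB _.
rewrite (@squeeze _ _ w x (ind R B)).
- by rewrite xsum_ind hiii.
- by move=> f; rewrite xsum_ind hiii.
- by rewrite xsum_ind setIT (base_card hB).
Qed.

Unset Implicit Arguments. Set Strict Implicit.

Theorem theorem9 (E : finType) (M : matroid E) (R : realType)
    (L : E -> E -> R) (x : E -> R) :
  (forall e f, L e f = L f e) ->
  in_base_polytope M x ->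
  [<-> sym_nash M L x;
       (forall B1 B2, is_base M B1 -> is_base M B2 ->
          cost (matvec L x) B1 = cost (matvec L x) B2);
       (forall B e, is_base M B ->
          #|B :&: level_set (matvec L x) e| = rank M (level_set (matvec L x) e));
       (forall e, xsum x (level_set (matvec L x) e)
                    = (rank M (level_set (matvec L x) e))%:R);
       (forall C, is_circuit M C ->
          exists e, C \subset level_set (matvec L x) e)].
Proof.
move=> hL hx; tfae.
- exact: i_ii.
- by move=> h; apply: v_iii; apply: ii_v.
- exact: iii_iv.
- by move=> h; apply: ii_v; apply: i_ii => //; apply: iv_i.
- by move=> h; apply: iv_i => //; apply: iii_iv => //; apply: v_iii.
Qed.
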